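(* Let $n\geqslant2$, $\lambda>0$, distinct points $p_1,\ldots,p_M\in\mathbb{Z}^n$ and positive integers $n_1,\ldots,n_M$ be given, and let $g=4\pi\sum_{j=1}^Mn_j\delta_{p_j}$. Let $\Omega_0\subset\mathbb{Z}^n$ be a finite set containing $\{p_j\}_{j=1}^M$ and let $\Omega$ be a finite connected subset with $\Omega_0\subset\Omega$. Fix a constant $K>2\lambda$. Let $u_0=0$ and, for $k\geqslant1$, let $u_k:\overline{\Omega}\to\mathbb{R}$ solve $$(\Delta-K)u_k=\lambda e^{u_{k-1}}(e^{u_{k-1}}-1)+g-Ku_{k-1}\ \text{ on }\Omega,\qquad u_k=0\ \text{ on }\delta\Omega.$$ Then for each $k$, $u_k$ is uniquely defined, and $0=u_0\geqslant u_1\geqslant u_2\geqslant\cdots$ on $\overline\Omega$.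
   Context: $\mathbb{Z}^n$ is the integer lattice graph with $x\sim y$ iff $\sum_i|x_i-y_i|=1$. For a finite $\Omega\subset\mathbb{Z}^n$, $\delta\Omega=\{y\in\mathbb{Z}^n\setminus\Omega:\exists x\in\Omega,\ y\sim x\}$ and $\overline\Omega=\Omega\cup\delta\Omega$. For $u:\overline\Omega\to\mathbb{R}$ and $x\in\Omega$, $\Delta u(x)=\sum_{y\sim x}(u(y)-u(x))$. $\delta_p$ is the function equal to $1$ at $p$ and $0$ elsewhere. *)

(* Defs.v *)
From HB Require Import structures.
From mathcomp Require Import all_boot all_order all_algebra.
From mathcomp Require Import all_classical all_reals all_analysis.
Set Implicit Arguments. Unset Strict Implicit. Unset Printing Implicit Defensive.
Import Order.TTheory GRing.Theory Num.Theory.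
Local Open Scope ring_scope.

Definition Zn (n : nat) := (n.-tuple int)%type.

Definition adj (n : nat) (x y : Zn n) : bool :=
  (\sum_(i < n) `|tnth x i - tnth y i|)%R == 1.

Definition shift (n : nat) (x : Zn n) (i : 'I_n) (s : int) : Zn n :=
  [tuple (tnth x j + (if j == i then s else 0)) | j < n].

Definition lap (R : realType) (n : nat) (u : Zn n -> R) (x : Zn n) : R :=
  \sum_(i < n) ((u (shift x i 1) - u x) + (u (shift x i (-1)) - u x)).

Definition bdry (n : nat) (Om : seq (Zn n)) (y : Zn n) : Prop :=
  y \notin Om /\ exists2 x, x \in Om & adj y x.

Definition clos (n : nat) (Om : seq (Zn n)) (y : Zn n) : Prop :=
  y \in Om \/ bdry Om y.

Definition connected_set (n : nat) (Om : seq (Zn n)) : Prop :=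
  forall x y, x \in Om -> y \in Om ->
    exists s : seq (Zn n), all (mem Om) s /\ path (@adj n) x s /\ last x s = y.

Definition gsrc (R : realType) (n M : nat) (p : 'I_M -> Zn n) (nn : 'I_M -> nat)
  (x : Zn n) : R :=
  4 * pi * \sum_(j < M) ((nn j)%:R * (if x == p j then 1 else 0)).

Definition solves_step (R : realType) (n : nat) (Om : seq (Zn n))
  (lam K : R) (g : Zn n -> R) (w v : Zn n -> R) : Prop :=
  (forall x, x \in Om ->
     lap v x - K * v x = lam * expR (w x) * (expR (w x) - 1) + g x - K * w x)
  /\ (forall y, bdry Om y -> v y = 0).

(* Main.v *)
Require Import Defs.
From HB Require Import structures.
From mathcomp Require Import all_boot all_order all_algebra.
From mathcomp Require Import all_classical all_reals all_analysis.
From mathcomp Require Import ring lra.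
Import Order.TTheory GRing.Theory Num.Theory.
Local Open Scope ring_scope.

Section Aux.
Variable R : realType.
Variable n : nat.

Lemma adj_shift (x : Zn n) d (s : int) : `|s| = 1 -> adj (Defs.shift x d s) x.
Proof.
move=> hs; rewrite /adj (bigD1 d) //= big1 ?addr0.
  by rewrite /Defs.shift tnth_mktuple eqxx addrAC subrr add0r hs.
by move=> i /negbTE Hi; rewrite /Defs.shift tnth_mktuple Hi addr0 subrr normr0.
Qed.

Lemma lapB (v w : Zn n -> R) x :
  lap (fun y => v y - w y) x = lap v x - lap w x.
Proof. rewrite /lap -sumrB; apply: eq_bigr => i _; ring. Qed.

Lemma lapN (v : Zn n -> R) x : lap (fun y => - v y) x = - lap v x.
Proof. by rewrite /lap -sumrN; apply: eq_bigr => i _; ring. Qed.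

Lemma lap0 x : lap (fun _ : Zn n => (0:R)) x = 0.
Proof. by rewrite /lap big1 // => i _; rewrite !subrr addr0. Qed.

Lemma lap_sum m (c : 'I_m -> R) (f : 'I_m -> Zn n -> R) x :
  lap (fun y => \sum_i c i * f i y) x = \sum_i c i * lap (f i) x.
Proof.
rewrite /lap; under [RHS]eq_bigr => i _ do rewrite mulr_sumr.
rewrite exchange_big; apply: eq_bigr => d _.
rewrite -!sumrB -big_split; apply: eq_bigr => i _ /=; by rewrite mulrDr !mulrBr.
Qed.

Lemma seq_argmax (T : eqType) (w : T -> R) (s : seq T) :
  s != [::] -> exists2 x0, x0 \in s & forall y, y \in s -> w y <= w x0.
Proof.
elim: s => // a s IH _.
case: (eqVneq s [::]) => [->|/IH [b bs Hb]].
  by exists a; rewrite ?mem_head // => y; rewrite inE => /eqP ->.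
case: (leP (w a) (w b)) => H.
  exists b; first by rewrite inE bs orbT.
  by move=> y; rewrite inE => /orP[/eqP->|/Hb].
exists a; first by rewrite mem_head.
move=> y; rewrite inE => /orP[/eqP->//|/Hb Hy].
exact: le_trans Hy (ltW H).
Qed.

Lemma maxprin (K : R) (Kpos : 0 < K) (Om : seq (Zn n)) (w : Zn n -> R) :
  (forall x, x \in Om -> 0 <= lap w x - K * w x) ->
  (forall y, bdry Om y -> w y <= 0) -> forall x, clos Om x -> w x <= 0.
Proof.
move=> HL Hb.
case: (eqVneq Om [::]) => [->|/(@seq_argmax _ w Om) [x0 x0O Hx0]].
  by move=> x [//|[_ [y]]]; rewrite in_nil.
have key : w x0 <= 0.
  rewrite leNgt; apply/negP => wpos.
  have Hnb : forall y, adj y x0 -> w y <= w x0.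
    move=> y ay; case yO: (y \in Om); first exact: Hx0.
    apply: le_trans (ltW wpos); apply: Hb; split; first by rewrite yO.
    by exists x0.
  have H2 : lap w x0 <= 0.
    apply: sumr_le0 => d _; rewrite -(addr0 0); apply: lerD;
    by rewrite subr_le0; apply: Hnb; apply: adj_shift; rewrite ?normrN.
  have H1 := HL _ x0O.
  have H3 : 0 < K * w x0 by apply: mulr_gt0.
  lra.
move=> x [xO|/Hb //]; exact: le_trans (Hx0 _ xO) key.
Qed.

End Aux.

Section Exist.
Variable R : realType.
Variable n : nat.
Variable Om : seq (Zn n).
Variable K : R.
Hypothesis Kpos : 0 < K.

Definition z0 : Zn n := [tuple (0:int) | _ < n].
Definition msz := size (undup Om).
Definition pt (i : 'I_msz) : Zn n := nth z0 (undup Om) i.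
Definition ee (i : 'I_msz) (y : Zn n) : R := (pt i == y)%:R.
Definition ext (v : 'rV[R]_msz) (y : Zn n) : R := \sum_i v 0 i * ee i y.
Definition Amx : 'M[R]_msz :=
  \matrix_(i, j) (lap (ee i) (pt j) - K * ee i (pt j)).
Definition Sol (f : Zn n -> R) : Zn n -> R :=
  ext (\row_j f (pt j) *m invmx Amx).

Lemma pt_in i : pt i \in Om.
Proof. by rewrite -mem_undup /pt mem_nth. Qed.

Lemma in_pt x : x \in Om -> exists j, x = pt j.
Proof.
move=> hx; have hx' : x \in undup Om by rewrite mem_undup.
have hi : (index x (undup Om) < msz)%N by rewrite /msz index_mem.
by exists (Ordinal hi); rewrite /pt /= nth_index.
Qed.

Lemma ext_pt v j : ext v (pt j) = v 0 j.
Proof.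
rewrite /ext (bigD1 j) //= big1 ?addr0; first by rewrite /ee eqxx mulr1.
move=> i Hij; rewrite /ee /pt nth_uniq ?undup_uniq //.
have -> : ((i:nat) == j) = false by apply/negbTE. 
by rewrite mulr0.
Qed.

Lemma ext_out v y : y \notin Om -> ext v y = 0.
Proof.
move=> hy; rewrite /ext big1 // => i _; rewrite /ee.
case: eqP => [e|_]; last by rewrite mulr0.
by move: hy; rewrite -e pt_in.
Qed.

Lemma ext_L v j : lap (ext v) (pt j) - K * ext v (pt j) = (v *m Amx) 0 j.
Proof.
rewrite /ext lap_sum !mxE mulr_sumr -sumrB; apply: eq_bigr => i _.
by rewrite mxE mulrBr mulrCA.
Qed.

Lemma Amx_unit : Amx \in unitmx.
Proof.
rewrite -row_free_unit -kermx_eq0; apply/eqP/matrixP => i j.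
rewrite [RHS]mxE.
set v := row i (kermx Amx).
have Hv : v *m Amx = 0 by rewrite /v -row_mul mulmx_ker row0.
have -> : kermx Amx i j = v 0 j by rewrite /v [RHS]mxE.
rewrite -ext_pt.
have HL : forall x, x \in Om -> lap (ext v) x - K * ext v x = 0.
  by move=> x /in_pt [j' ->]; rewrite ext_L Hv mxE.
have Hb : forall y, bdry Om y -> ext v y = 0 by move=> y [hy _]; exact: ext_out.
apply/eqP; rewrite eq_le; apply/andP; split.
  apply: (@maxprin R n K Kpos Om (ext v)) => [x /HL ->//|y /Hb ->//|]; last by left; exact: pt_in.
rewrite -oppr_le0; apply: (@maxprin R n K Kpos Om (fun y => - ext v y)).
- by move=> x xO; rewrite lapN mulrN opprK addrC -opprB HL // oppr0.
- by move=> y /Hb ->; rewrite oppr0.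
- by left; exact: pt_in.
Qed.

Lemma Sol_in f x : x \in Om -> lap (Sol f) x - K * Sol f x = f x.
Proof.
move=> /in_pt [j ->]; rewrite /Sol ext_L -mulmxA mulVmx ?Amx_unit //.
by rewrite mulmx1 mxE.
Qed.

Lemma Sol_out f y : y \notin Om -> Sol f y = 0.
Proof. exact: ext_out. Qed.

End Exist.

Lemma Fdec (R : realType) (lam K a b : R) : 0 < lam -> lam <= K -> a <= b -> b <= 0 ->
  lam * expR b * (expR b - 1) - K * b <= lam * expR a * (expR a - 1) - K * a.
Proof.
move=> hl hK hab hb.
set A := expR a; set B := expR b.
have hA : A = expR (a - b) * B by rewrite /A /B -expRD subrK.
have hE1 : expR (a - b) <= 1 by rewrite expR_le1 subr_le0.
have hE2 : 1 + (a - b) <= expR (a - b) by apply: expR_ge1Dx.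
have hB0 : 0 < B by apply: expR_gt0.
have hB1 : B <= 1 by rewrite expR_le1.
have hA1 : A <= 1 by rewrite expR_le1 (le_trans hab hb).
have h1 : 0 <= B - A.
  rewrite hA -{1}(mul1r B) -mulrBl; apply: mulr_ge0; last exact: ltW.
  by rewrite subr_ge0.
have h2 : B - A <= b - a.
  rewrite hA -{1}(mul1r B) -mulrBl.
  apply: (@le_trans _ _ ((1 - expR (a - b)) * 1)).
    by apply: ler_wpM2l; [rewrite subr_ge0|].
  rewrite mulr1; lra.
have h3 : (B - A) * (B + A - 1) <= (B - A) * 1.
  by apply: ler_wpM2l => //; lra.
have h4 : lam * ((B - A) * (B + A - 1)) <= lam * (b - a).
  rewrite mulr1 in h3.
  apply: ler_wpM2l; first exact: ltW.
  exact: le_trans h3 h2.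
have h5 : lam * (b - a) <= K * (b - a).
  by apply: ler_wpM2r => //; rewrite subr_ge0.
have E : lam * B * (B - 1) - K * b - (lam * A * (A - 1) - K * a)
   = lam * ((B - A) * (B + A - 1)) - K * (b - a) by ring.
rewrite -subr_le0 E subr_le0; exact: le_trans h4 h5.
Qed.

Fixpoint useq (R : realType) (n : nat) (Om : seq (Zn n)) (lam K : R)
  (g : Zn n -> R) (k : nat) : Zn n -> R :=
  match k with
  | 0%N => fun _ => 0
  | k'.+1 => @Sol R n Om K (fun x => lam * expR (useq R n Om lam K g k' x) *
               (expR (useq R n Om lam K g k' x) - 1) + g x - K * useq R n Om lam K g k' x)
  end.

Theorem lemma3p1 (R : realType) (n M : nat) (lam K : R)
  (p : 'I_M -> Zn n) (nn : 'I_M -> nat) (Om0 Om : seq (Zn n)) :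
  (2 <= n)%N -> 0 < lam -> injective p -> (forall j, (0 < nn j)%N) ->
  (forall j, p j \in Om0) -> {subset Om0 <= Om} -> connected_set Om ->
  2 * lam < K ->
  exists u : nat -> Zn n -> R,
    (forall x, clos Om x -> u 0%N x = 0) /\
    forall k : nat,
      solves_step Om lam K (gsrc R p nn) (u k) (u k.+1) /\
      (forall v, solves_step Om lam K (gsrc R p nn) (u k) v ->
         forall x, clos Om x -> v x = u k.+1 x) /\
      (forall x, clos Om x -> u k.+1 x <= u k x).
Proof.
move=> _ hl _ _ _ _ _ hK.
have Kpos : 0 < K by lra.
have lK : lam <= K by lra.
set g := gsrc R p nn.
have g0 : forall x, 0 <= g x.
  move=> x; rewrite /g /gsrc; apply: mulr_ge0.
    by apply: mulr_ge0; [lra | exact: ltW (pi_gt0 R)].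
  apply: sumr_ge0 => j _; apply: mulr_ge0 => //; by case: ifP.
set u := useq R n Om lam K g.
have Lu : forall k x, x \in Om -> lap (u k.+1) x - K * u k.+1 x =
    lam * expR (u k x) * (expR (u k x) - 1) + g x - K * u k x.
  by move=> k x xO; rewrite /u /= Sol_in.
have Bu : forall k y, bdry Om y -> u k.+1 y = 0.
  by move=> k y [hy _]; rewrite /u /= Sol_out.
have mono : forall k x, clos Om x -> u k.+1 x <= u k x /\ u k x <= 0.
  elim=> [|k IH] x hx.
    split => //.
    rewrite -subr_le0.
    apply: (@maxprin R n K Kpos Om (fun y => u 1%N y - u 0%N y)) => //.
    - move=> y yO; rewrite lapB.
      have -> : lap (u 1%N) y - lap (u 0%N) y - K * (u 1%N y - u 0%N y) =
        (lap (u 1%N) y - K * u 1%N y) - (lap (u 0%N) y - K * u 0%N y) by ring.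
      have u0 : forall z, u 0%N z = 0 by [].
      have lu0 : lap (u 0%N) y = 0 by exact: lap0.
      rewrite Lu // !u0 lu0 expR0 subrr !mulr0 !subr0 add0r; exact: g0.
    - by move=> y /(Bu 0%N) ->; rewrite subrr.
  have hk : u k.+1 x <= 0 by case: (IH x hx) => h1 h2; exact: le_trans h1 h2.
  split => //.
  rewrite -subr_le0.
  apply: (@maxprin R n K Kpos Om (fun y => u k.+2 y - u k.+1 y)) => //.
  - move=> y yO; rewrite lapB.
    have -> : lap (u k.+2) y - lap (u k.+1) y - K * (u k.+2 y - u k.+1 y) =
      (lap (u k.+2) y - K * u k.+2 y) - (lap (u k.+1) y - K * u k.+1 y) by ring.
    rewrite !Lu //.
    have [h1 h2] := IH y (or_introl yO).
    have := @Fdec _ _ _ _ _ hl lK h1 h2; lra.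
  - by move=> y hy; rewrite (Bu _ _ hy) (Bu k _ hy) subrr.
exists u; split => // k; split; [|split].
- by split; [exact: Lu | exact: Bu].
- move=> v [hv1 hv2] x hx.
  have HL : forall y, y \in Om ->
      lap (fun z => v z - u k.+1 z) y - K * (v y - u k.+1 y) = 0.
    move=> y yO; rewrite lapB.
    have -> : lap v y - lap (u k.+1) y - K * (v y - u k.+1 y) =
      (lap v y - K * v y) - (lap (u k.+1) y - K * u k.+1 y) by ring.
    by rewrite hv1 // Lu // subrr.
  apply/eqP; rewrite eq_le; apply/andP; split; rewrite -subr_le0.
  + apply: (@maxprin R n K Kpos Om (fun y => v y - u k.+1 y)) => //.
    * by move=> y /HL ->.
    * by move=> y hy; rewrite hv2 // Bu // subrr.
  + apply: (@maxprin R n K Kpos Om (fun y => u k.+1 y - v y)) => //.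
    * move=> y yO; rewrite lapB.
      have -> : lap (u k.+1) y - lap v y - K * (u k.+1 y - v y) =
        - (lap (fun z => v z - u k.+1 z) y - K * (v y - u k.+1 y)).
        by rewrite lapB; ring.
      by rewrite HL // oppr0.
    * by move=> y hy; rewrite hv2 // Bu // subrr.
- by move=> x hx; case: (mono k x hx).
Qed.
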